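(* Let $S$ be a finite semigroup whose minimal ideal $J$ consists of right zeroes and such that $S$ acts faithfully on the right of $J$. Then $\llbracket S\rrbracket^{\mathsf{bar}}=\llbracket S\rrbracket$.
   Context: A pseudovariety is a class of finite semigroups closed under finite direct products, subsemigroups and homomorphic images; $\llbracket\mathscr{K}\rrbracket$ is the pseudovariety generated by $\mathscr{K}$. An element $z$ is a right zero if $sz=z$ for all $s$. For a semigroup $S$, $S^\bullet=S$ if $S$ is a monoid and $S^\bullet=S^I$ (external identity adjoined) otherwise; $S^{\mathsf{bar}}$ is the semigroup of transformations of $S^\bullet$ (acting on the right) consisting of right multiplications by elements of $S$ together with all constant maps on $S^\bullet$. For a pseudovariety $\mathbf{V}$, $\mathbf{V}^{\mathsf{bar}}=\llbracket T^{\mathsf{bar}}\mid T\in\mathbf{V}\rrbracket$. *)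

(* Defs.v *)
From mathcomp Require Import all_boot.
Set Implicit Arguments. Unset Strict Implicit. Unset Printing Implicit Defensive.

Record finSemigroup := FinSemigroup {
  sg_car :> finType;
  sg_op : sg_car -> sg_car -> sg_car;
  sg_opA : associative sg_op;
  sg_nonempty : 0 < #|sg_car| }.

Arguments sg_op {_} _ _.
Notation "x \* y" := (sg_op x y) (at level 40, left associativity).

Definition sg_hom (S T : finSemigroup) (f : S -> T) :=
  forall x y : S, f (x \* y) = f x \* f y.

Lemma unit_nonempty : 0 < #|{: unit}|. Proof. by rewrite card_unit. Qed.
Definition trivial_sg : finSemigroup :=
  @FinSemigroup unit (fun _ _ => tt) (fun _ _ _ => erefl) unit_nonempty.

Definition prod_op (S T : finSemigroup) (x y : S * T) : S * T :=
  (x.1 \* y.1, x.2 \* y.2).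

Lemma prod_opA (S T : finSemigroup) : associative (@prod_op S T).
Proof. by move=> [a b] [c d] [e f]; rewrite /prod_op /= !sg_opA. Qed.

Lemma prod_nonempty (S T : finSemigroup) : 0 < #|{: S * T}|.
Proof. by rewrite card_prod muln_gt0 !sg_nonempty. Qed.

Definition prod_sg (S T : finSemigroup) : finSemigroup :=
  FinSemigroup (@prod_opA S T) (prod_nonempty S T).

(* Pseudovarieties: classes closed under finite direct products,
   subsemigroups (injective homomorphisms) and homomorphic images. *)
Definition pseudovariety (V : finSemigroup -> Prop) : Prop :=
  [/\ V trivial_sg,
      (forall S T, V S -> V T -> V (prod_sg S T)),
      (forall (S T : finSemigroup) (f : T -> S), sg_hom f -> injective f -> V S -> V T)
    & (forall (S T : finSemigroup) (f : S -> T), sg_hom f ->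
         (forall y, exists x, f x = y) -> V S -> V T)].

Definition generated (K : finSemigroup -> Prop) (T : finSemigroup) : Prop :=
  forall V, pseudovariety V -> (forall S, K S -> V S) -> V T.

Definition is_monoidb (S : finSemigroup) : bool :=
  [exists e : S, [forall s : S, (e \* s == s) && (s \* e == s)]].

Definition adj_op (S : finSemigroup) (x y : option S) : option S :=
  match x, y with
  | None, _ => y
  | _, None => x
  | Some a, Some b => Some (a \* b)
  end.

Lemma adj_opA (S : finSemigroup) : associative (@adj_op S).
Proof. by move=> [a|] [b|] [c|] //=; rewrite sg_opA. Qed.

Lemma adj_nonempty (S : finSemigroup) : 0 < #|{: option S}|.
Proof. by rewrite card_option. Qed.

Definition adj_sg (S : finSemigroup) : finSemigroup :=
  FinSemigroup (@adj_opA S) (adj_nonempty S).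

Definition dot (S : finSemigroup) : finSemigroup :=
  if is_monoidb S then S else adj_sg S.

Definition dotin (S : finSemigroup) : S -> dot S :=
  match is_monoidb S as b return S -> sg_car (if b then S else adj_sg S) with
  | true => id
  | false => Some
  end.

Lemma dotinM (S : finSemigroup) (s t : S) : dotin (s \* t) = dotin s \* dotin t.
Proof. by rewrite /dot /dotin; case: (is_monoidb S). Qed.

(* S^bar: right multiplications by elements of S and constant maps on S^bullet,
   as transformations acting on the right (x (f g) = (x f) g). *)
Definition bar_gen (S : finSemigroup) (u : S + dot S) : {ffun dot S -> dot S} :=
  match u with
  | inl s => [ffun x => x \* dotin s]
  | inr a => [ffun => a]
  end.

Definition bar_pred (S : finSemigroup) : pred {ffun dot S -> dot S} :=
  fun f => [exists u, f == bar_gen u].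

Definition bar_car (S : finSemigroup) : finType := {f : {ffun dot S -> dot S} | bar_pred f}.

Definition fcompr (S : finSemigroup) (f g : {ffun dot S -> dot S}) : {ffun dot S -> dot S} :=
  [ffun x => g (f x)].

Definition sum_op (S : finSemigroup) (u v : S + dot S) : S + dot S :=
  match u, v with
  | inl s, inl t => inl (s \* t)
  | inr a, inl t => inr (a \* dotin t)
  | _, inr b => inr b
  end.

Lemma bar_genM (S : finSemigroup) (u v : S + dot S) :
  fcompr (bar_gen u) (bar_gen v) = bar_gen (sum_op u v).
Proof.
apply/ffunP => x; case: u => [s|a]; case: v => [t|b]; rewrite /fcompr /= !ffunE //=.
by rewrite ?ffunE dotinM sg_opA.
Qed.

Lemma bar_closed (S : finSemigroup) (f g : bar_car S) : bar_pred (fcompr (val f) (val g)).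
Proof.
case: f => f /= /existsP [u /eqP Hf]; case: g => g /= /existsP [v /eqP Hg].
by apply/existsP; exists (sum_op u v); rewrite Hf Hg bar_genM.
Qed.

Definition bar_op (S : finSemigroup) (f g : bar_car S) : bar_car S :=
  exist _ (fcompr (val f) (val g)) (bar_closed f g).

Lemma bar_opA (S : finSemigroup) : associative (@bar_op S).
Proof.
move=> f g h; apply: val_inj => /=; apply/ffunP => x; by rewrite /fcompr !ffunE.
Qed.

Lemma bar_nonempty (S : finSemigroup) : 0 < #|bar_car S|.
Proof.
have /card_gt0P [s _] := sg_nonempty S.
have Hs : bar_pred (bar_gen (inl s)) by apply/existsP; exists (inl s).
by apply/card_gt0P; exists (exist (fun f => is_true (bar_pred f)) _ Hs).
Qed.

Definition bar (S : finSemigroup) : finSemigroup :=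
  FinSemigroup (@bar_opA S) (bar_nonempty S).

Definition barV (V : finSemigroup -> Prop) : finSemigroup -> Prop :=
  generated (fun U => exists T, V T /\ U = bar T).

Definition is_ideal (S : finSemigroup) (I : {set S}) : Prop :=
  I != set0 /\ forall s j, j \in I -> (s \* j \in I) /\ (j \* s \in I).

Definition minimal_ideal (S : finSemigroup) (J : {set S}) : Prop :=
  is_ideal J /\ forall I, is_ideal I -> I \subset J -> I = J.

Definition sg_right_zero (S : finSemigroup) (z : S) : Prop := forall s : S, s \* z = z.

Definition faithful_right_on (S : finSemigroup) (J : {set S}) : Prop :=
  forall s t : S, (forall j, j \in J -> j \* s = j \* t) -> s = t.

(* Main.v *)
Require Import Defs.
From mathcomp Require Import all_boot.
Set Implicit Arguments. Unset Strict Implicit. Unset Printing Implicit Defensive.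

Lemma dotin_inj (S : finSemigroup) : injective (@dotin S).
Proof. rewrite /dotin /dot; case: (is_monoidb S) => x y /=; [done | by case]. Qed.

Definition is_id (S : finSemigroup) (e : S) := forall x, e \* x = x /\ x \* e = x.

Lemma is_id_monoid (S : finSemigroup) (e : S) : is_id e -> is_monoidb S.
Proof.
move=> H; apply/existsP; exists e; apply/forallP => x.
by have [-> ->] := H x; rewrite eqxx.
Qed.

Lemma monoid_id (S : finSemigroup) : is_monoidb S -> exists e : S, is_id e.
Proof.
move/existsP=> [e /forallP H]; exists e => x.
by have /andP[/eqP -> /eqP ->] := H x.
Qed.

Lemma id_uniq (S : finSemigroup) (e f : S) : is_id e -> is_id f -> e = f.
Proof. move=> He Hf; have [H1 _] := He f; have [_ H2] := Hf e; by rewrite -H1 H2. Qed.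

Lemma dot_id (S : finSemigroup) : exists e : dot S, is_id e.
Proof.
rewrite /dot; case E: (is_monoidb S).
  by have [e He] := monoid_id (idP E); exists e.
by exists None => -[x|].
Qed.

Lemma dot_cases (S : finSemigroup) (a : dot S) :
  (exists u, a = dotin u) \/ (is_monoidb S = false /\ is_id a).
Proof.
move: a; rewrite /dot /dotin; case E: (is_monoidb S) => a.
  by left; exists a.
case: a => [u|]; first by left; exists u.
by right; split => // -[x|].
Qed.

Lemma gen_pv (K : finSemigroup -> Prop) : pseudovariety (generated K).
Proof.
split.
- by move=> V [].
- move=> S T HS HT V HV HK; case: (HV) => _ Hp _ _; apply: Hp; [exact: HS | exact: HT].
- move=> S T f hf inf HS V HV HK; case: (HV) => _ _ Hs _; exact: Hs hf inf (HS V HV HK).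
- move=> S T f hf sf HS V HV HK; case: (HV) => _ _ _ Hq; exact: Hq hf sf (HS V HV HK).
Qed.

Lemma gen_incl (K : finSemigroup -> Prop) S : K S -> generated K S.
Proof. by move=> HS V _ HK; apply: HK. Qed.

Section Sub.
Variables (A : finSemigroup) (Pr : pred A).
Hypothesis PrM : forall x y, Pr x -> Pr y -> Pr (x \* y).
Hypothesis Pr0 : exists x, Pr x.
Definition sub_car : finType := {x : A | Pr x}.
Definition sub_op (x y : sub_car) : sub_car :=
  exist _ (val x \* val y) (PrM (valP x) (valP y)).
Lemma sub_opA : associative sub_op.
Proof. by move=> x y z; apply: val_inj; rewrite /= sg_opA. Qed.
Lemma sub_nonempty : 0 < #|sub_car|.
Proof. case: Pr0 => x Hx; apply/card_gt0P; by exists (exist _ x Hx). Qed.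
Definition sub_sg := FinSemigroup sub_opA sub_nonempty.
Lemma sub_val_hom : sg_hom (fun x : sub_sg => val x).
Proof. by []. Qed.
Lemma sub_val_inj : injective (fun x : sub_sg => val x).
Proof. exact: val_inj. Qed.
End Sub.

Lemma elem (S : finSemigroup) : exists x : S, True.
Proof. by have /card_gt0P [x _] := sg_nonempty S; exists x. Qed.

Lemma pv_factor V (pv : pseudovariety V) (A B C : finSemigroup) (h : A -> B) (g : A -> C) :
  sg_hom h -> sg_hom g -> (forall c, exists a, g a = c) ->
  (forall u v, h u = h v -> g u = g v) -> V B -> V C.
Proof.
move=> hh hg sg hg' VB; case: (pv) => _ _ Hs Hq.
pose Pr := [pred b : B | [exists a, h a == b]].
have PrM : forall x y, Pr x -> Pr y -> Pr (x \* y).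
  move=> x y /existsP [a /eqP <-] /existsP [b /eqP <-].
  by apply/existsP; exists (a \* b); rewrite hh.
have Pr0 : exists x, Pr x.
  by have [a _] := elem A; exists (h a); apply/existsP; exists a.
have VI : V (sub_sg PrM Pr0) by apply: Hs VB; [exact: sub_val_hom | exact: sub_val_inj].
pose F := fun x : sub_sg PrM Pr0 => g (xchoose (existsP (valP x))).
have FP : forall x : sub_sg PrM Pr0, h (xchoose (existsP (valP x))) = val x.
  by move=> x; apply/eqP; exact: (xchooseP (existsP (valP x))).
apply: (Hq _ _ F) VI.
  move=> x y; rewrite /F -hg; apply: hg'; by rewrite hh !FP.
move=> c; have [a <-] := sg c.
have Ha : Pr (h a) by apply/existsP; exists a.
exists (exist _ (h a) Ha); rewrite /F; apply: hg'; by rewrite FP.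
Qed.

Definition good (P : finSemigroup) (J : {set P}) :=
  [/\ J != set0, (forall j p, j \in J -> j \* p \in J),
      (forall z, z \in J -> sg_right_zero z) & faithful_right_on J].

Definition V0 (W : finSemigroup -> Prop) (T : finSemigroup) :=
  exists (P : finSemigroup) (J : {set P}) (U : finSemigroup) (i : U -> P) (p : U -> T),
  [/\ good J, W P, sg_hom i /\ injective i, sg_hom p & forall t, exists u, p u = t].

Lemma V0_pv W : pseudovariety W -> pseudovariety (V0 W).
Proof.
move=> pvW; case: (pvW) => Wt Wp Ws Wq; split.
- exists trivial_sg, [set: trivial_sg], trivial_sg, id, id; split => //.
  + split.
    * by apply/set0Pn; exists tt.
    * by move=> *; rewrite in_setT.
    * by move=> [] _ [].
    * by move=> [] [].
  + by split => // x y.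
  + by move=> t; exists t.
- move=> T1 T2 [P1 [J1 [U1 [i1 [p1 [[J1n J1i J1z J1f] WP1 [hi1 ii1] hp1 sp1]]]]]]
               [P2 [J2 [U2 [i2 [p2 [[J2n J2i J2z J2f] WP2 [hi2 ii2] hp2 sp2]]]]]].
  exists (prod_sg P1 P2), (setX J1 J2 : {set prod_sg P1 P2}), (prod_sg U1 U2),
    (fun u => (i1 u.1, i2 u.2)), (fun u => (p1 u.1, p2 u.2)); split.
  + case/set0Pn: J1n => j1 Hj1; case/set0Pn: J2n => j2 Hj2.
    split.
    * by apply/set0Pn; exists (j1, j2); rewrite in_setX Hj1 Hj2.
    * move=> [a b] [c d]; rewrite !in_setX /= => /andP [Ha Hb].
      by rewrite /prod_op /= J1i // J2i.
    * move=> [a b]; rewrite in_setX => /andP [Ha Hb] [c d].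
      by rewrite /= /prod_op /= J1z // J2z.
    * move=> [s1 s2] [t1 t2] H; congr pair.
      - apply: J1f => j Hj; have := H (j, j2); rewrite in_setX Hj Hj2 => /(_ isT).
        by rewrite /= /prod_op /= => -[].
      - apply: J2f => j Hj; have := H (j1, j); rewrite in_setX Hj Hj1 => /(_ isT).
        by rewrite /= /prod_op /= => -[].
  + exact: Wp.
  + split; first by move=> [a b] [c d]; rewrite /= /prod_op /= hi1 hi2.
    by move=> [a b] [c d] /= [/ii1 -> /ii2 ->].
  + by move=> [a b] [c d]; rewrite /= /prod_op /= hp1 hp2.
  + move=> [t1 t2]; have [u1 <-] := sp1 t1; have [u2 <-] := sp2 t2.
    by exists (u1, u2).
- move=> T T' f hf inf [P [J [U [i [p [gJ WP [hi ii] hp sp]]]]]].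
  pose Pr := [pred u : U | [exists t', p u == f t']].
  have PrM : forall x y, Pr x -> Pr y -> Pr (x \* y).
    move=> x y /existsP [a /eqP Ha] /existsP [b /eqP Hb].
    by apply/existsP; exists (a \* b); rewrite hp hf Ha Hb.
  have Pr0 : exists x, Pr x.
    have [t' _] := elem T'; have [u Hu] := sp (f t').
    by exists u; apply/existsP; exists t'; rewrite Hu.
  pose p' := fun x : sub_sg PrM Pr0 => xchoose (existsP (valP x)).
  have p'P : forall x : sub_sg PrM Pr0, f (p' x) = p (val x).
    by move=> x; apply/esym/eqP; exact: (xchooseP (existsP (valP x))).
  exists P, J, (sub_sg PrM Pr0), (fun x => i (val x)), p'; split => //.
  + split; first by move=> x y /=; rewrite hi.
    by move=> x y /ii /val_inj.
  + by move=> x y; apply: inf; rewrite hf !p'P /= hp.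
  + move=> t'; have [u Hu] := sp (f t').
    have Hu' : Pr u by apply/existsP; exists t'; rewrite Hu.
    by exists (exist _ u Hu'); apply: inf; rewrite p'P.
- move=> T T'' f hf sf [P [J [U [i [p [gJ WP [hi ii] hp sp]]]]]].
  exists P, J, U, i, (fun u => f (p u)); split => //.
  + by move=> x y; rewrite hp hf.
  + by move=> t; have [x <-] := sf t; have [u <-] := sp x; exists u.
Qed.

Lemma sum_opA (S : finSemigroup) : associative (@sum_op S).
Proof. by move=> [a|a] [b|b] [c|c] //=; rewrite ?dotinM sg_opA. Qed.

Lemma Q_nonempty (S : finSemigroup) : 0 < #|{: S + dot S}|.
Proof. by rewrite card_sum addn_gt0 sg_nonempty. Qed.

Definition Qsg (S : finSemigroup) := FinSemigroup (@sum_opA S) (Q_nonempty S).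

Lemma pick_cases (U : finSemigroup) (a : dot U) :
  (exists u, a = dotin u /\ [pick v | dotin v == a] = Some u) \/
  ([pick v | dotin v == a] = None /\ is_monoidb U = false /\ is_id a).
Proof.
case: (dot_cases a) => [[u Hu] | [Hm Ha]].
  left; exists u; split => //; case: pickP => [v /eqP Hv | H].
    by rewrite (dotin_inj (etrans Hv Hu)).
  by have := H u; rewrite Hu eqxx.
right; split => //; case: pickP => // v /eqP Hv.
have : is_monoidb U; last by rewrite Hm.
apply: (@is_id_monoid _ v) => x; have [H1 H2] := Ha (dotin x).
by rewrite -Hv -!dotinM in H1 H2; split; apply: dotin_inj.
Qed.

Lemma barel_pred (T : finSemigroup) (w : T + dot T) : bar_pred (bar_gen w).
Proof. by apply/existsP; exists w. Qed.

Definition barel (T : finSemigroup) (w : T + dot T) : bar T :=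
  exist (fun f => is_true (bar_pred f)) (bar_gen w) (barel_pred w).

Lemma barelM (T : finSemigroup) (u v : T + dot T) :
  barel (sum_op u v) = (barel u : bar T) \* barel v.
Proof. by apply: val_inj; rewrite /= bar_genM. Qed.

Section Key.
Variables (U P : finSemigroup) (J : {set P}) (i : U -> P).
Hypotheses (gJ : good J) (ih : sg_hom i) (ii : injective i).

Definition kap (j : P) (a : dot U) : P :=
  if [pick v | dotin v == a] is Some u then j \* i u else j.

Definition Phi (j : P) (w : Qsg U) : P :=
  match w with inl s => i s | inr a => kap j a end.

Lemma kap_dotin j u : kap j (dotin u) = j \* i u.
Proof.
rewrite /kap; case: pickP => [v /eqP /dotin_inj -> // | H].
by have := H u; rewrite eqxx.
Qed.

Lemma kapM j a t : kap j (a \* dotin t) = kap j a \* i t.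
Proof.
case: (pick_cases a) => [[u [-> _]] | [Hp [_ Ha]]].
  by rewrite -dotinM !kap_dotin ih sg_opA.
by have [-> _] := Ha (dotin t); rewrite kap_dotin /kap Hp.
Qed.

Lemma kapJ j a : j \in J -> kap j a \in J.
Proof. case: gJ => _ Ji _ _ Hj; rewrite /kap; case: pickP => // u _; exact: Ji. Qed.

Lemma Phi_hom j : j \in J -> sg_hom (Phi j).
Proof.
case: gJ => _ Ji Jz _ Hj [s|a] [t|b] /=.
- exact: ih.
- by rewrite Jz // kapJ.
- exact: kapM.
- by rewrite Jz // kapJ.
Qed.

Lemma kap_inj a b : (forall j, j \in J -> kap j a = kap j b) -> a = b.
Proof.
case: gJ => Jn Ji Jz Jf H.
have Hu : forall u, is_monoidb U = false -> (forall j, j \in J -> j \* i u = j) -> False.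
  move=> u Hm Hj; have : is_monoidb U; last by rewrite Hm.
  apply: (@is_id_monoid _ u) => x; split; apply: ii; apply: Jf => j Hj'.
  - by rewrite ih sg_opA Hj.
  - by rewrite ih sg_opA Hj // Ji.
move: H; case: (pick_cases a) => [[u [-> _]] | [Hpa [Hm Ha]]];
  case: (pick_cases b) => [[v [-> _]] | [Hpb [Hm' Hb]]] H.
- congr dotin; apply: ii; apply: Jf => j Hj; by rewrite -!kap_dotin H.
- exfalso; apply: (Hu u Hm') => j Hj; by rewrite -kap_dotin H // /kap Hpb.
- exfalso; apply: (Hu v Hm) => j Hj; by rewrite -kap_dotin -H // /kap Hpa.
- exact: id_uniq.
Qed.

Lemma key_lr s a : (forall j, j \in J -> i s = kap j a) -> bar_gen (inl s) = bar_gen (inr a).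
Proof.
move=> H; have gJ' := gJ; case: gJ' => Jn Ji Jz Jf; case/set0Pn: Jn => j0 Hj0.
have sJ : i s \in J by rewrite (H j0 Hj0) kapJ.
have -> : a = dotin s.
  apply: kap_inj => j Hj; by rewrite kap_dotin (Jz _ sJ) -(H j Hj).
apply/ffunP => x; rewrite !ffunE.
case: (dot_cases x) => [[y ->] | [_ Hx]]; last by case: (Hx (dotin s)).
rewrite -dotinM; congr dotin; apply: ii; by rewrite ih (Jz _ sJ).
Qed.

Lemma key u v : (forall j, j \in J -> Phi j u = Phi j v) -> bar_gen u = bar_gen v.
Proof.
have gJ' := gJ; case: gJ' => Jn _ _ _; case/set0Pn: Jn => j0 Hj0.
case: u v => [s|a] [t|b] /= H.
- by rewrite (ii (H j0 Hj0)).
- exact: key_lr.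
- by symmetry; apply: key_lr => j Hj; rewrite H.
- by rewrite (kap_inj H).
Qed.

End Key.

Section Transfer.
Variables (U T : finSemigroup) (p : U -> T) (eT : dot T).
Hypotheses (ph : sg_hom p) (ps : forall t, exists u, p u = t) (eTid : is_id eT).

Definition pidot (a : dot U) : dot T :=
  if [pick v | dotin v == a] is Some u then dotin (p u) else eT.

Lemma pidot_dotin u : pidot (dotin u) = dotin (p u).
Proof.
rewrite /pidot; case: pickP => [v /eqP /dotin_inj -> // | H].
by have := H u; rewrite eqxx.
Qed.

Lemma pidotM a t : pidot (a \* dotin t) = pidot a \* dotin (p t).
Proof.
case: (pick_cases a) => [[u [-> _]] | [Hp [_ Ha]]].
  by rewrite -dotinM !pidot_dotin ph dotinM.
have [-> _] := Ha (dotin t); rewrite pidot_dotin /pidot Hp.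
by case: (eTid (dotin (p t))).
Qed.

Lemma pidot_surj y : exists a, pidot a = y.
Proof.
case: (dot_cases y) => [[t ->] | [Hm Hy]].
  have [u <-] := ps t; exists (dotin u); exact: pidot_dotin.
have [e He] := dot_id U; exists e.
case: (pick_cases e) => [[u [Heu _]] | [Hp _]].
  exfalso; have : is_monoidb T; last by rewrite Hm.
  have Hu : forall x, u \* x = x /\ x \* u = x.
    move=> x; have [H1 H2] := He (dotin x); rewrite Heu -!dotinM in H1 H2.
    by split; apply: dotin_inj.
  apply: (@is_id_monoid _ (p u)) => t; have [w <-] := ps t.
  by rewrite -!ph; have [-> ->] := Hu w.
rewrite /pidot Hp; exact: id_uniq.
Qed.

Definition Qmap (w : Qsg U) : T + dot T :=
  match w with inl s => inl (p s) | inr a => inr (pidot a) end.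

Lemma transfer w x : bar_gen (Qmap w) (pidot x) = pidot (bar_gen w x).
Proof. by case: w => [s|a]; rewrite !ffunE //= pidotM. Qed.

Definition gmap (w : Qsg U) : bar T := barel (Qmap w).

Lemma gmap_hom : sg_hom gmap.
Proof.
move=> u v; rewrite /gmap -barelM; congr barel.
by case: u v => [s|a] [t|b] //=; rewrite ?ph ?pidotM.
Qed.

Lemma gmap_surj f : exists w, gmap w = f.
Proof.
case: f => f Hf; case/existsP: (Hf) => -[t|y] /eqP Hfw.
  have [s Hs] := ps t; exists (inl s); apply: val_inj; by rewrite /= Hfw Hs.
have [a Ha] := pidot_surj y; exists (inr a); apply: val_inj; by rewrite /= Hfw Ha.
Qed.

Lemma gmap_eq u v : bar_gen u = bar_gen v -> gmap u = gmap v.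
Proof.
move=> H; apply: val_inj => /=; apply/ffunP => y; have [x <-] := pidot_surj y.
by rewrite !transfer H.
Qed.
End Transfer.

Fixpoint pw (P : finSemigroup) (k : nat) : finSemigroup :=
  if k is k'.+1 then prod_sg P (pw P k') else trivial_sg.

Lemma pw_in V (pv : pseudovariety V) P k : V P -> V (pw P k).
Proof. case: pv => Vt Vp _ _ HP; elim: k => //= k IH; exact: Vp. Qed.

Lemma tuple_hom (A P : finSemigroup) (X : eqType) (js : seq X) (F : X -> A -> P) :
  (forall x, x \in js -> sg_hom (F x)) ->
  exists H : A -> pw P (size js), sg_hom H /\
    forall a b, H a = H b -> forall x, x \in js -> F x a = F x b.
Proof.
elim: js => [|x js IH] Hh /=.
  by exists (fun _ => tt); split.
have [H' [hH' eH']] : exists H : A -> pw P (size js), sg_hom H /\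
    forall a b, H a = H b -> forall x, x \in js -> F x a = F x b.
  by apply: IH => y Hy; apply: Hh; rewrite in_cons Hy orbT.
exists (fun a => (F x a, H' a)); split.
  move=> a b; rewrite /= /prod_op /= hH' Hh //; by rewrite in_cons eqxx.
move=> a b [E1 E2] y; rewrite in_cons => /orP [/eqP -> // | Hy].
exact: eH'.
Qed.

Lemma main_bar W (pvW : pseudovariety W) T : V0 W T -> W (bar T).
Proof.
case=> P [J [U [i [p [gJ WP [hi ii] hp sp]]]]].
have [eT HeT] := dot_id T.
have HH : forall x, x \in enum J -> sg_hom (Phi i x).
  by move=> j; rewrite mem_enum => Hj; apply: (Phi_hom gJ).
have [H [hH eH]] := tuple_hom HH.
apply: (pv_factor pvW (h := H) (g := gmap p eT)).
- exact: hH.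
- exact: gmap_hom.
- exact: gmap_surj.
- move=> u v Huv; apply: (gmap_eq hp sp HeT); apply: (key gJ hi ii) => j Hj.
  by apply: (eH _ _ Huv); rewrite mem_enum.
- exact: pw_in.
Qed.

Definition emb (S : finSemigroup) (s : S) : bar S := barel (inl s).

Lemma emb_hom S : sg_hom (@emb S).
Proof. by move=> s t; rewrite /emb -barelM. Qed.

Lemma emb_inj S : injective (@emb S).
Proof.
move=> s t /(congr1 val) /= E; have [e He] := dot_id S.
have := congr1 (fun f : {ffun dot S -> dot S} => f e) E; rewrite /= !ffunE.
by case: (He (dotin s)) => -> _; case: (He (dotin t)) => -> _; apply: dotin_inj.
Qed.

Theorem corollary2p6 (S : finSemigroup) (J : {set S}) :
  minimal_ideal J ->
  (forall z, z \in J -> sg_right_zero z) ->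
  faithful_right_on J ->
  forall T : finSemigroup,
    barV (generated (fun U => U = S)) T <-> generated (fun U => U = S) T.
Proof.
move=> [[Jn Ji] _] Jz Jf T.
have pvW := gen_pv (fun U => U = S).
split.
- move=> HT; apply: HT => // U [T' [HT' ->]].
  apply: main_bar => //; apply: HT'; first exact: V0_pv.
  move=> U0 ->; exists S, J, S, id, id; split => //.
  + split => // j s Hj; by case: (Ji s j Hj).
  + exact: gen_incl.
  + by split.
  + by move=> t; exists t.
- move=> HT V HV Hbar; apply: HT => // U ->.
  case: (HV) => _ _ Hs _; apply: (Hs _ _ (@emb S)); [exact: emb_hom | exact: emb_inj |].
  apply: Hbar; exists S; split => //; exact: gen_incl.
Qed.
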